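(* Let $L\ge2$ and let $\mathcal H_1^L$ be the complete 1-constituent CCRN of length $L$ and order two. Then its number of complexes is $|\mathcal C_L|=\frac{(L+1)(L+2)}{2}-4$, its number of linkage classes is $\ell=2L-3$, the dimension of its stoichiometric subspace is $s=L-1$, and its deficiency is $\delta=|\mathcal C_L|-\ell-s=\frac{(L-1)(L-2)}{2}$.
   Context: The complete 1-constituent CCRN of length $L$ and order two has species set $\{\bar1,\dots,\bar L\}$ (cluster $\bar n$ has size $n$). A complex is a multiset of one or two species, written $\bar a$ or $\bar a+\bar b$, with size $a$, resp. $a+b$. The reaction set consists of all reactions $y\to y'$ between two distinct complexes $y\ne y'$ of width at most two having the same size (i.e. all $\bar a+\bar b\to\bar c+\bar d$ and $\bar a+\bar b\rightleftharpoons\bar c$ etc. with $a+b=c+d$, resp. $a+b=c$), so every reaction is reversible. The complex set $\mathcal C_L$ consists of the complexes that occur as input or output of at least one reaction. Linkage classes are the connected components of the (undirected) graph with vertex set $\mathcal C_L$ and an edge for each reaction. Each reaction $y\to y'$ has reaction vector $y'-y\in\mathbb Z^L$ (counting species multiplicities), the stoichiometric subspace is the span of all reaction vectors, $s$ is its dimension, and the deficiency is $\delta=|\mathcal C_L|-\ell-s$. *)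

(* Defs.v *)
From HB Require Import structures.
From mathcomp Require Import all_boot all_order all_algebra.
Set Implicit Arguments. Unset Strict Implicit. Unset Printing Implicit Defensive.
Import Order.TTheory GRing.Theory Num.Theory.

(* Species of the complete 1-constituent CCRN of length L: the index
   i : 'I_L stands for the cluster \bar{i+1}, of size i+1.
   A (candidate) complex is a multiset of species, encoded by its
   multiplicity vector y : 'I_L -> {0,1,2}. *)
Definition cplx (L : nat) := {ffun 'I_L -> 'I_3}.

Definition width L (y : cplx L) : nat := \sum_(i < L) (y i : nat).

Definition csize L (y : cplx L) : nat := \sum_(i < L) (i.+1 * y i)%N.

Definition admissible L (y : cplx L) : bool := (0 < width y <= 2)%N.

Definition reaction L (y y' : cplx L) : bool :=
  [&& admissible y, admissible y', y != y' & csize y == csize y'].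

Definition complexes L : {set cplx L} :=
  [set y | [exists y', reaction y y' || reaction y' y]].

Definition reaction_graph L : rel (cplx L) :=
  fun y y' => reaction y y' || reaction y' y.

Definition linkage_classes L : {set {set cplx L}} :=
  [set [set z in complexes L | connect (@reaction_graph L) y z]
     | y in complexes L].

Definition n_linkage L : nat := #|linkage_classes L|.

Definition reaction_vector L (y y' : cplx L) : 'rV[rat]_L :=
  \row_i (((y' i : nat)%:R - (y i : nat)%:R) : rat)%R.

Definition stoich_subspace L :=
  (\sum_(p : cplx L * cplx L | reaction p.1 p.2)
      <<reaction_vector p.1 p.2>>)%MS.

Definition stoich_dim L : nat := \rank (stoich_subspace L).

Definition deficiency L : int :=
  (#|complexes L|%:Z - (n_linkage L)%:Z - (stoich_dim L)%:Z)%R.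

(* Main.v *)
Require Import Defs.
From HB Require Import structures.
From mathcomp Require Import all_boot all_order all_algebra.
From mathcomp Require Import zify ring lra.
Set Implicit Arguments. Unset Strict Implicit. Unset Printing Implicit Defensive.

Definition gA L (a b : nat) : cplx L :=
  [ffun k : 'I_L => inord ((k.+1 == a) + (k.+1 == b))].

Lemma gAE L a b (k : 'I_L) : (gA L a b k : nat) = (k.+1 == a) + (k.+1 == b).
Proof. by rewrite ffunE inordK //; case: (_ == a); case: (_ == b). Qed.

Lemma gAC L a b : gA L a b = gA L b a.
Proof. by apply/ffunP => k; apply/val_inj; rewrite /= !gAE addnC. Qed.

Lemma sumE L (f : nat -> nat) a :
  \sum_(k < L) f k.+1 * (k.+1 == a) = if 0 < a <= L then f a else 0.
Proof.
elim: L => [|L IH]; first by rewrite big_ord0; case: a => //= a; rewrite ltn0 andbF.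
rewrite big_ord_recr /= IH.
case: eqP => [<-|Hne].
  by rewrite muln1 ltnn andbF leqnn /=.
rewrite muln0 addn0.
case: a IH Hne => //= a _ Hne.
case: ifP; case: ifP => //; lia.
Qed.

Lemma wsum L (f : nat -> nat) a b :
  \sum_(k < L) f k.+1 * (gA L a b k) =
  (if 0 < a <= L then f a else 0) + (if 0 < b <= L then f b else 0).
Proof.
rewrite -!sumE -big_split /=; apply: eq_bigr => k _; by rewrite gAE mulnDr.
Qed.

Lemma width_gA L a b : a <= L -> b <= L -> width (gA L a b) = (0 < a) + (0 < b).
Proof.
move=> ha hb; rewrite /width.
have W := wsum L (fun _ => 1) a b.
rewrite (eq_bigr (fun k : 'I_L => 1 * gA L a b k)); last by move=> k _; rewrite mul1n.
rewrite W ha hb; clear W; by case: a ha => //; case: b hb.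
Qed.

Lemma csize_gA L a b : a <= L -> b <= L -> csize (gA L a b) = a + b.
Proof.
move=> ha hb; rewrite /csize.
rewrite (wsum L id) ha hb; by case: a ha => //; case: b hb.
Qed.

Lemma sq_gA L a b : a <= L -> b <= L ->
  \sum_(k < L) (k.+1 * k.+1) * gA L a b k = a * a + b * b.
Proof.
move=> ha hb; rewrite (wsum L (fun x => x * x)) ha hb; by case: a ha => //; case: b hb.
Qed.

Lemma gA_inj L a b c d : a <= b -> b <= L -> c <= d -> d <= L ->
  gA L a b = gA L c d -> a = c /\ b = d.
Proof.
move=> h1 h2 h3 h4 E.
have s1 := csize_gA (leq_trans h1 h2) h2.
have s2 := csize_gA (leq_trans h3 h4) h4.
have q1 := sq_gA (leq_trans h1 h2) h2.
have q2 := sq_gA (leq_trans h3 h4) h4.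
rewrite E in s1 q1; rewrite s1 in s2; rewrite q1 in q2.
nia.
Qed.

Lemma pos_exists L (P : pred 'I_L) (E : 'I_L -> nat) :
  0 < \sum_(i < L | P i) E i -> exists2 i, P i & 0 < E i.
Proof.
move=> H; case: (pickP (fun i => P i && (0 < E i))) => [i /andP[]|N]; first by exists i.
move: H; rewrite big1 // => i Pi; move: (N i); rewrite Pi /=; lia.
Qed.

Lemma zero_rest L (P : pred 'I_L) (E : 'I_L -> nat) :
  \sum_(i < L | P i) E i = 0 -> forall i, P i -> E i = 0.
Proof. by move=> /eqP; rewrite sum_nat_eq0 => /forallP H i Pi; move: (H i); rewrite Pi => /eqP. Qed.

Lemma neqS L (k i : 'I_L) : k != i -> (k.+1 == i.+1 :> nat) = false.
Proof. by move=> kn; rewrite eqSS; apply/negbTE. Qed.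

Lemma adm_class0 L (y : cplx L) : admissible y ->
  exists a b, [/\ a <= L, b <= L, 0 < b & y = gA L a b].
Proof.
rewrite /admissible /width => /andP[H0 H2].
have [i _ Hi] := pos_exists (P := xpredT) H0.
move: H0 H2; rewrite (bigD1 i) //= => H0 H2.
have yi3 : (y i : nat) < 3 := ltn_ord _.
case: (posnP (\sum_(k < L | k != i) (y k : nat))) => Hr.
- have Z := zero_rest Hr.
  have Hi' : (y i : nat) = 1 \/ (y i : nat) = 2 by lia.
  case: Hi' => Hv.
  + exists 0, i.+1; split => //.
    apply/ffunP => k; apply/val_inj; rewrite /= gAE /=.
    case: (eqVneq k i) => [->|kn]; first by rewrite Hv eqxx.
    by rewrite Z // neqS.
  + exists i.+1, i.+1; split => //; try exact: ltn_ord.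
    apply/ffunP => k; apply/val_inj; rewrite /= gAE /=.
    case: (eqVneq k i) => [->|kn]; first by rewrite Hv eqxx.
    by rewrite Z // neqS.
- have [j jn Hj] := pos_exists Hr.
  move: Hr H2; rewrite (bigD1 j) //= => Hr H2.
  have Z : forall k, (k != i) && (k != j) -> (y k : nat) = 0.
    move: H2; set r := (X in _ + (_ + X) <= 2) => H2.
    have r0 : r = 0 by lia.
    exact: zero_rest r0.
  have Hv : (y i : nat) = 1 by lia.
  have Hw : (y j : nat) = 1 by lia.
  exists i.+1, j.+1; split => //; try exact: ltn_ord.
  apply/ffunP => k; apply/val_inj; rewrite /= gAE /=.
  have ij : (i.+1 == j.+1 :> nat) = false by apply: neqS; rewrite eq_sym.
  case: (eqVneq k i) => [->|kn]; first by rewrite Hv eqxx ij.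
  case: (eqVneq k j) => [->|kn2]; first by rewrite Hw eqxx eq_sym ij.
  by rewrite Z ?kn ?kn2 // !neqS.
Qed.

Lemma adm_class L (y : cplx L) : admissible y ->
  exists a b, [/\ a <= b, b <= L, 0 < b & y = gA L a b].
Proof.
move/adm_class0 => [a [b [ha hb b0 ->]]].
case: (leqP a b) => hab; first by exists a, b.
exists b, a; split => //; [exact: ltnW | lia | exact: gAC].
Qed.

Lemma adm_gA L a b : a <= L -> b <= L -> 0 < b -> admissible (gA L a b).
Proof. move=> ha hb b0; rewrite /admissible width_gA //; lia. Qed.

Lemma react_sides L (y y' : cplx L) : admissible y -> admissible y' -> y != y' ->
  csize y = csize y' ->
  exists a b, [/\ a <= b, b <= L, 2 <= a + b, a + b <= 2 * L - 2 & y = gA L a b].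
Proof.
move=> /adm_class [a [b [h1 h2 h3 ->]]] /adm_class [c [d [h4 h5 h6 ->]]] ne.
rewrite !csize_gA; try lia => E.
have nq : ~ (a = c /\ b = d) by move=> [e1 e2]; subst; rewrite eqxx in ne.
exists a, b; split => //; lia.
Qed.

Lemma inC L (hL : 2 <= L) (y : cplx L) : y \in complexes L <->
  exists a b, [/\ a <= b, b <= L, 2 <= a + b, a + b <= 2 * L - 2 & y = gA L a b].
Proof.
split.
- rewrite inE => /existsP [y' /orP [|] /and4P [h1 h2 h3 /eqP h4]].
    exact: (react_sides h1 h2 h3 h4).
  by apply: (react_sides h2 h1); rewrite // eq_sym.
- move=> [a [b [h1 h2 h3 h4 ->]]].
  pose a' := if a == 0 then 1 else if b < L then a.-1 else a.+1.
  pose b' := a + b - a'.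
  have [k1 k2 k3 k4] : [/\ a' <= b', b' <= L, 0 < b' & a' != a].
    rewrite /b' /a'; case: eqP => ha; first by split; lia.
    case: ifP => hb; split; lia.
  rewrite inE; apply/existsP; exists (gA L a' b'); apply/orP; left.
  apply/and4P; split.
  + apply: adm_gA; lia.
  + apply: adm_gA; lia.
  + apply/negP => /eqP /gA_inj H.
    have : a = a' /\ b = b' by apply: H; lia.
    by case=> e _; rewrite e eqxx in k4.
  + rewrite !csize_gA; try lia.
Qed.

Definition DD L : {set 'I_L.+1 * 'I_L.+1} :=
  [set p : 'I_L.+1 * 'I_L.+1 | (p.1 <= p.2) && (2 <= p.1 + p.2 <= 2 * L - 2)].
Definition EE n : {set 'I_n * 'I_n} := [set p : 'I_n * 'I_n | p.1 <= p.2].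

Lemma complexesE L (hL : 2 <= L) :
  complexes L = [set gA L p.1 p.2 | p : 'I_L.+1 * 'I_L.+1 in DD L].
Proof.
apply/setP => y; apply/idP/imsetP.
- move/(inC hL) => [a [b [h1 h2 h3 h4 ->]]].
  exists (inord a, inord b); last by rewrite /= !inordK //; lia.
  by rewrite inE /= !inordK //; try lia; apply/andP; split; lia.
- move=> [p]; rewrite inE => /andP [h1 /andP [h2 h3]] ->.
  apply/(inC hL); exists p.1, p.2; split => //; rewrite -ltnS; exact: ltn_ord.
Qed.

Lemma card_complexes L (hL : 2 <= L) : #|complexes L| = #|DD L|.
Proof.
rewrite complexesE // card_in_imset // => p q; rewrite !inE.
move=> /andP [h1 _] /andP [h2 _] /gA_inj H.
have [e1 e2] : (p.1 : nat) = q.1 /\ (p.2 : nat) = q.2.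
  by apply: H => //; rewrite -ltnS; exact: ltn_ord.
by case: p q e1 e2 {h1 h2 H} => [p1 p2] [q1 q2] /= /val_inj -> /val_inj ->.
Qed.

Lemma sum_le n b : \sum_(a < n) (a <= b : nat) = minn n b.+1.
Proof.
elim: n => [|n IH]; first by rewrite big_ord0.
rewrite big_ord_recr /= IH; case: leqP => h; lia.
Qed.

Lemma tri n : (\sum_(b < n) b.+1) * 2 = n * n.+1.
Proof.
elim: n => [|n IH]; first by rewrite big_ord0.
rewrite big_ord_recr /= mulnDl IH; lia.
Qed.

Lemma card_EE n : #|EE n| * 2 = n * n.+1.
Proof.
rewrite -sum1_card -tri.
rewrite (eq_bigr (fun b : 'I_n => \sum_(a < n) (a <= b : nat))); last first.
  by move=> b _; rewrite sum_le; have := ltn_ord b; lia.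
rewrite exchange_big pair_big /= big_mkcond /=.
congr (_ * 2); apply: eq_bigr => p _; rewrite inE; by case: (_ <= _).
Qed.

Definition qq L (a b : nat) : 'I_L.+1 * 'I_L.+1 := (inord a, inord b).

Lemma qqE L (p : 'I_L.+1 * 'I_L.+1) a b : a <= L -> b <= L ->
  (p == qq L a b) = ((p.1 : nat) == a) && ((p.2 : nat) == b).
Proof.
move=> ha hb; case: p => p1 p2; rewrite /qq xpair_eqE /=.
by rewrite -!(inj_eq val_inj) /= !inordK.
Qed.

Lemma card_DD L (hL : 2 <= L) : #|DD L| + 4 = #|EE L.+1|.
Proof.
set s := [:: qq L 0 0; qq L 0 1; qq L L.-1 L; qq L L L].
have -> : 4 = #|[set x in s]|.
  rewrite cardsE; apply/esym/card_uniqP.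
  rewrite /s /= !inE !negb_or !qqE /= ?inordK; try lia.

rewrite -(cardsID (DD L) (EE L.+1)).
have -> : EE L.+1 :&: DD L = DD L.
  apply/setIidPr/subsetP => p; rewrite !inE; by case/andP.
congr (_ + _); apply: eq_card => p; rewrite !inE.
rewrite /s !qqE; try lia.
have := ltn_ord p.1; have := ltn_ord p.2.
case: p => [p1 p2] /=.
move: (p1 : nat) (p2 : nat) => x y hx hy.
lia.
Qed.

Lemma connect_csize L (y z : cplx L) :
  connect (@reaction_graph L) y z -> csize y = csize z.
Proof.
move/connectP => [p pth ->] {z}; elim: p y pth => //= x p IH y /andP [e pth].
rewrite -(IH x pth); move: e; rewrite /reaction_graph /reaction.
by case/orP => /and4P [_ _ _ /eqP].
Qed.

Lemma inC_adm L (hL : 2 <= L) (y : cplx L) : y \in complexes L -> admissible y.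
Proof. move/(inC hL) => [a [b [h1 h2 h3 h4 ->]]]; apply: adm_gA; lia. Qed.

Lemma inC_size L (hL : 2 <= L) (y : cplx L) : y \in complexes L ->
  2 <= csize y <= 2 * L - 2.
Proof. move/(inC hL) => [a [b [h1 h2 h3 h4 ->]]]; rewrite csize_gA; lia. Qed.

Lemma admC L (z : cplx L) : [exists y', reaction z y' || reaction y' z] -> admissible z.
Proof. by case/existsP => y' /orP [] /and4P []. Qed.

Lemma class_eq L (hL : 2 <= L) (y : cplx L) : y \in complexes L ->
  [set z in complexes L | connect (@reaction_graph L) y z] =
  [set z in complexes L | csize z == csize y].
Proof.
move=> yC; apply/setP => z; rewrite !inE; apply/andP/andP => [[zC c]|[zC /eqP c]].
  by split => //; rewrite (connect_csize c).
split => //; case: (eqVneq y z) => [->|ne]; first exact: connect0.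
apply: connect1; rewrite /reaction_graph /reaction.
by rewrite (inC_adm hL yC) (admC zC) ne c eqxx.
Qed.

Lemma exists_size L (hL : 2 <= L) n : 2 <= n <= 2 * L - 2 ->
  exists2 y, y \in complexes L & csize y = n.
Proof.
move=> hn; exists (gA L (n - minn n L) (minn n L)).
  apply/(inC hL); exists (n - minn n L), (minn n L); split => //; lia.
rewrite csize_gA; lia.
Qed.

Lemma sum_ge n b : \sum_(a < n) (b <= a : nat) = n - b.
Proof.
elim: n => [|n IH]; first by rewrite big_ord0.
rewrite big_ord_recr /= IH; case: leqP => h; lia.
Qed.

Lemma card_linkage L (hL : 2 <= L) : n_linkage L = 2 * L - 3.
Proof.
pose h (n : nat) := [set z in complexes L | csize z == n].
pose S := [set n : 'I_(2 * L - 2).+1 | 2 <= n].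
rewrite /n_linkage.
have -> : linkage_classes L = [set h (n : nat) | n : 'I_(2 * L - 2).+1 in S].
  apply/setP => C; apply/imsetP/imsetP.
  - move=> [y yC ->].
    have hs := inC_size hL yC.
    exists (inord (csize y)); first by rewrite inE inordK; lia.
    by rewrite class_eq // /h inordK //; lia.
  - move=> [n]; rewrite inE => nS ->.
    have [y yC ys] : exists2 y, y \in complexes L & csize y = n.
      by apply: exists_size => //; have := ltn_ord n; lia.
    by exists y => //; rewrite class_eq // /h ys.
rewrite card_in_imset.
  rewrite -sum1_card big_mkcond /=.
  rewrite (eq_bigr (fun a : 'I_(2 * L - 2).+1 => (2 <= a : nat))); last first.
    by move=> a _; rewrite inE; case: (_ <= _).
  rewrite sum_ge; lia.
move=> n1 n2; rewrite !inE => h1 h2 E.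
have [y yC ys] : exists2 y, y \in complexes L & csize y = n1.
  by apply: exists_size => //; have := ltn_ord n1; lia.
have : y \in h n1 by rewrite inE yC ys eqxx.
rewrite E inE ys => /andP [_ /eqP e]; exact: val_inj.
Qed.

Import GRing.Theory Num.Theory.
Local Open Scope ring_scope.

Definition wcol L : 'M[rat]_(L, 1) := \col_(i < L) (i.+1)%:R.

Lemma rv_ker L (y y' : cplx L) : reaction y y' ->
  (reaction_vector y y' <= kermx (wcol L))%MS.
Proof.
case/and4P => _ _ _ /eqP E; rewrite sub_kermx; apply/eqP/matrixP => i j.
rewrite !mxE.
under eq_bigr => k _ do rewrite !mxE mulrBl -!natrM.
rewrite sumrB -!natr_sum.
have -> : (\sum_(k < L) (y' k * k.+1))%N = csize y'.
  by apply: eq_bigr => k _; rewrite mulnC.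
have -> : (\sum_(k < L) (y k * k.+1))%N = csize y.
  by apply: eq_bigr => k _; rewrite mulnC.
by rewrite E subrr.
Qed.

Lemma stoich_le L : (stoich_dim L.+1 <= L)%N.
Proof.
rewrite /stoich_dim.
have : (stoich_subspace L.+1 <= kermx (wcol L.+1))%MS.
  apply/sumsmx_subP => p Rp; rewrite genmxE; exact: rv_ker.
move/mxrankS; rewrite mxrank_ker.
have -> : \rank (wcol L.+1) = 1%N.
  have nz : (wcol L.+1)^T != 0.
    apply/eqP => /matrixP /(_ 0 0); rewrite !mxE => /eqP; by rewrite pnatr_eq0.
  by rewrite -mxrank_tr rank_rV nz.
by rewrite subn1.
Qed.

Lemma rv_step L n (hn : (n.+1 < L.+1)%N) :
  delta_mx 0 (Ordinal hn) =
  reaction_vector (gA L.+1 1 n.+1) (gA L.+1 0 n.+2) + delta_mx 0 ord0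
  + delta_mx 0 (Ordinal (ltnW hn)) :> 'rV[rat]_L.+1.
Proof.
apply/rowP => k; rewrite !mxE !gAE /= -!val_eqE /=.
have H : ((k == n.+1 :> nat) + ((k.+1 == 1)%N + (k.+1 == n.+1)%N)
         = (k.+1 == 0)%N + (k.+1 == n.+2)%N + (k == 0 :> nat) + (k == n :> nat))%N.
  lia.
have := congr1 (fun x : nat => x%:R : rat) H; rewrite !natrD => H'.
lra.
Qed.

Local Close Scope ring_scope.

Lemma key_sub L (n : nat) (hn : n < L.+1) :
  ((delta_mx (ord0 : 'I_1) (Ordinal hn) : 'rV[rat]_L.+1) <= stoich_subspace L.+1 + (delta_mx (ord0 : 'I_1) ord0 : 'rV[rat]_L.+1))%MS.
Proof.
set S := stoich_subspace L.+1.
set e0 : 'rV[rat]_L.+1 := delta_mx ord0 ord0.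
elim: n hn => [|n IH] hn.
  by rewrite (_ : Ordinal hn = ord0); [exact: addsmxSr | exact: val_inj].
rewrite rv_step; apply: addmx_sub; [apply: addmx_sub|exact: IH].
  apply: submx_trans (addsmxSl S e0).
  apply: (sumsmx_sup (gA L.+1 1 n.+1, gA L.+1 0 n.+2)).
    apply/and4P; split.
    - by apply: adm_gA; lia.
    - by apply: adm_gA; lia.
    - apply/negP => /eqP /gA_inj H.
      have [] : 1 = 0 /\ n.+1 = n.+2 by apply: H; lia.
      by [].
    - by rewrite !csize_gA //; lia.
  by rewrite genmxE.
exact: addsmxSr.
Qed.

Lemma stoich_ge L : L.+1 <= stoich_dim L.+1 + 1.
Proof.
set S := stoich_subspace L.+1.
set e0 : 'rV[rat]_L.+1 := delta_mx ord0 ord0.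
have full : ((1%:M)%R <= S + e0)%MS.
  apply/row_subP => i; rewrite row1.
  by rewrite (_ : i = Ordinal (ltn_ord i)) //; [exact: key_sub | exact: val_inj].
have := mxrankS full; rewrite mxrank1 => h1.
apply: leq_trans h1 _.
apply: leq_trans (mxrank_adds_leqif S e0).1 _.
rewrite /stoich_dim -/S leq_add2l.
exact: rank_leq_row.
Qed.

Lemma stoich_eq L (hL : 2 <= L) : stoich_dim L = L - 1.
Proof.
case: L hL => [|[|L]] // _.
have := stoich_le L.+1; have := stoich_ge L.+1; lia.
Qed.

Unset Implicit Arguments.

Theorem mainTheorem13 (L : nat) (hL : (2 <= L)%N) :
  [/\ #|complexes L| = ((L + 1) * (L + 2) %/ 2 - 4)%N,
      n_linkage L = (2 * L - 3)%N,
      stoich_dim L = (L - 1)%N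
    & deficiency L = (((L - 1) * (L - 2)) %/ 2)%N%:Z%R].
Proof.
have cC := card_complexes hL. have cD := card_DD hL. have cE := card_EE L.+1.
have nl := card_linkage hL. have sd := stoich_eq hL.
have hx : #|complexes L| = ((L + 1) * (L + 2) %/ 2 - 4)%N.
  rewrite (_ : (L+1)*(L+2) = #|EE L.+1| * 2)%N; last by rewrite cE; lia.
  rewrite mulnK //; lia.
split => //.
rewrite /deficiency nl sd.
have h2 : (#|complexes L| = (2 * L - 3) + (L - 1) + ((L - 1) * (L - 2)) %/ 2)%N.
  have e : ((L - 1) * (L - 2) = (#|complexes L| - (3 * L - 4)) * 2)%N.
    rewrite cC; nia.
  rewrite e mulnK //; rewrite cC; nia.
rewrite h2; lia.
Qed.
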